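(* Consider a bipartite experiment where Alice chooses $x\in\{0,1\}$ and obtains $a\in\{\pm1\}$ with probability $\pi_{a|x}:=p(a|x)$, and conditioned on $(a,x)$ Bob's system is in the pure qubit state $\rho_{a|x}=|\psi_{a|x}\rangle\langle\psi_{a|x}|$. Bob chooses $y\in\{0,1\}$ and performs the binary projective measurement with observable $B_y=\mathbf b_y\cdot\boldsymbol\sigma$, $\|\mathbf b_y\|=1$, obtaining $b\in\{\pm1\}$, so that $p(a,b|x,y)=\pi_{a|x}\mathrm{Tr}\big(\rho_{a|x}\tfrac{I+bB_y}{2}\big)$. Let $E_{xy}=\sum_{a,b}ab\,p(a,b|x,y)$ and $S_{\mathrm{CHSH}}=E_{00}+E_{01}+E_{10}-E_{11}$. For each $x$ let $$D_x=\eta_1^2+\eta_2^2+2\eta_1\eta_2\sqrt{1-|\gamma_x|^2}+|\gamma_x|^2(\eta_1\eta_2-\eta_{\min}^2),$$ with $\eta_1=\pi_{+|x}$, $\eta_2=\pi_{-|x}$, $\eta_{\min}=\min\{\eta_1,\eta_2\}$, $\gamma_x=\langle\psi_{+|x}|\psi_{-|x}\rangle$. Then $$S_{\mathrm{CHSH}}\le 2\sqrt{(2D_0-1)^2+(2D_1-1)^2}.$$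
   Context: $\boldsymbol\sigma$ denotes the vector of Pauli matrices. $D_x$ is the fidelity-based discriminability of the conditional two-state ensemble $\{(\pi_{+|x},\rho_{+|x}),(\pi_{-|x},\rho_{-|x})\}$. *)

(* Defs.v *)
From mathcomp Require Import all_boot all_order all_algebra.
Set Implicit Arguments. Unset Strict Implicit. Unset Printing Implicit Defensive.
Import Order.TTheory GRing.Theory Num.Theory.
Local Open Scope ring_scope.

Section Qubit.
Variable C : numClosedFieldType.

(* outcome/sign convention: true = +1, false = -1 *)
Definition sgn (b : bool) : C := if b then 1 else -1.

Definition pauliX : 'M[C]_2 := \matrix_(i, j) (if i == j then 0 else 1).
Definition pauliY : 'M[C]_2 :=
  \matrix_(i, j) (if i == j then 0 else if i == 0 then - 'i else 'i).
Definition pauliZ : 'M[C]_2 :=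
  \matrix_(i, j) (if i == j then (if i == 0 then 1 else -1) else 0).

Definition bloch_obs (b : 'rV[C]_3) : 'M[C]_2 :=
  b 0 0 *: pauliX + b 0 1 *: pauliY + b 0 2 *: pauliZ.

Definition adjmx m n (M : 'M[C]_(m, n)) : 'M[C]_(n, m) := (map_mx Num.conj M)^T.

Definition inner (u v : 'cV[C]_2) : C := \sum_i (u i 0)^* * v i 0.

Definition proj (psi : 'cV[C]_2) : 'M[C]_2 := psi *m adjmx psi.

Definition joint_prob (pi : bool -> bool -> C) (psi : bool -> bool -> 'cV[C]_2)
  (bv : bool -> 'rV[C]_3) (a b x y : bool) : C :=
  pi x a * \tr (proj (psi x a) *m (2^-1 *: (1%:M + sgn b *: bloch_obs (bv y)))).

Definition corrE pi psi bv (x y : bool) : C :=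
  \sum_(a : bool) \sum_(b : bool) sgn a * sgn b * joint_prob pi psi bv a b x y.

(* x = 0 is false, x = 1 is true *)
Definition S_CHSH pi psi bv : C :=
  corrE pi psi bv false false + corrE pi psi bv false true
  + corrE pi psi bv true false - corrE pi psi bv true true.

Definition Dx (pi : bool -> bool -> C) (psi : bool -> bool -> 'cV[C]_2) (x : bool) : C :=
  let eta1 := pi x true in
  let eta2 := pi x false in
  let etamin := Num.min eta1 eta2 in
  let g := inner (psi x true) (psi x false) in
  eta1 ^+ 2 + eta2 ^+ 2 + 2 * eta1 * eta2 * sqrtC (1 - `|g| ^+ 2)
  + `|g| ^+ 2 * (eta1 * eta2 - etamin ^+ 2).

End Qubit.

(* Main.v *)
Require Import Defs.
From mathcomp Require Import all_boot all_order all_algebra ring.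
Import Order.TTheory GRing.Theory Num.Theory.
Local Open Scope ring_scope.

Section S.
Variable C : numClosedFieldType.
Definition r1 (p : 'cV[C]_2) := (p 0 0)^* * p 1 0 + (p 1 0)^* * p 0 0.
Definition r2 (p : 'cV[C]_2) := 'i * ((p 1 0)^* * p 0 0 - (p 0 0)^* * p 1 0).
Definition r3 (p : 'cV[C]_2) := (p 0 0)^* * p 0 0 - (p 1 0)^* * p 1 0.

Lemma jp_expand pi psi (bv : bool -> 'rV[C]_3) a b x y :
  joint_prob pi psi bv a b x y = pi x a * 2^-1 * (inner (psi x a) (psi x a) +
    sgn C b * (bv y 0 0 * r1 (psi x a) + bv y 0 1 * r2 (psi x a) + bv y 0 2 * r3 (psi x a))).
Proof.
rewrite /joint_prob /mxtrace /proj /adjmx /bloch_obs /inner /r1 /r2 /r3.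
rewrite !big_ord_recl !big_ord0 /=.
rewrite !(mxE, big_ord_recl, big_ord0) /=.
have -> : lift ord0 ord0 = 1 :> 'I_2 by apply/val_inj.
ring.
Qed.


Lemma keyD (e1 e2 s : C) : 0 <= e1 -> e1 <= e2 -> e1 + e2 = 1 -> 0 <= s -> s <= 1 ->
  1 - 4 * e1 * e2 * (1 - s ^+ 2) <=
  (2 * (e1 ^+ 2 + e2 ^+ 2 + 2 * e1 * e2 * s + (1 - s ^+ 2) * (e1 * e2 - e1 ^+ 2)) - 1) ^+ 2.
Proof.
move=> h1 h12 hs s0 s1.
have e2E : e2 = 1 - e1 by rewrite -hs addrC addKr.
have e2ge : 0 <= e2 by apply: le_trans h12.
have d0 : 0 <= e2 - e1 by rewrite subr_ge0.
have t0 : 0 <= 1 - s by rewrite subr_ge0.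
have m1 : e1 <= 1 by rewrite -hs lerDl.
have t1 : 1 - s <= 1 by rewrite lerBlDr lerDl.
have mt : 0 <= 1 - e1 * (1 - s) by rewrite subr_ge0 mulr_ile1.
rewrite -subr_ge0.
have -> : (2 * (e1 ^+ 2 + e2 ^+ 2 + 2 * e1 * e2 * s + (1 - s ^+ 2) * (e1 * e2 - e1 ^+ 2)) - 1) ^+ 2
   - (1 - 4 * e1 * e2 * (1 - s ^+ 2)) =
   4 * e1 * (e2 - e1) * (1 - s) * s * (2 * (1 - e1 * (1 - s)) + e1 * (1 - s) * (e2 - e1) * s).
  rewrite e2E; ring.
apply: mulr_ge0; last first.
  by apply: addr_ge0; rewrite ?mulr_ge0 // ler0n.
by rewrite !mulr_ge0 // ler0n.
Qed.


Definition Q (b : 'rV[C]_3) p := b 0 0 * r1 p + b 0 1 * r2 p + b 0 2 * r3 p.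

Lemma corrE_expand pi psi bv x y :
  (forall a, inner (psi x a) (psi x a) = 1) ->
  corrE pi psi bv x y = pi x true * Q (bv y) (psi x true) - pi x false * Q (bv y) (psi x false).
Proof.
move=> hn; rewrite /corrE !big_bool /= !jp_expand !hn /sgn /Q.
by field.
Qed.

Lemma inner2 (p q : 'cV[C]_2) : inner p q = (p 0 0)^* * q 0 0 + (p 1 0)^* * q 1 0.
Proof.
rewrite /inner !big_ord_recl big_ord0 addr0 /=.
by have -> : lift ord0 ord0 = 1 :> 'I_2 by apply/val_inj.
Qed.

Lemma ii : 'i * 'i = -1 :> C.
Proof. by rewrite -expr2 sqrCi. Qed.

Lemma rdot (p q : 'cV[C]_2) : r1 p * r1 q + r2 p * r2 q + r3 p * r3 q =
  2 * (inner p q * inner q p) - inner p p * inner q q.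
Proof.
rewrite /r2 mulrACA ii !inner2 /r1 /r3; ring.
Qed.

Lemma inner_conj (p q : 'cV[C]_2) : (inner p q)^* = inner q p.
Proof.
rewrite !inner2 rmorphD !rmorphM /= !conjCK; ring.
Qed.

Lemma cs_inner (p q : 'cV[C]_2) : inner p p * inner q q - inner p q * inner q p =
  `|p 0 0 * q 1 0 - p 1 0 * q 0 0| ^+ 2.
Proof.
rewrite normCK rmorphB !rmorphM /= !inner2; ring.
Qed.

Lemma r1_real (p : 'cV[C]_2) : r1 p \is Num.real.
Proof. apply/CrealP; rewrite /r1 rmorphD !rmorphM /= !conjCK; ring. Qed.
Lemma r2_real (p : 'cV[C]_2) : r2 p \is Num.real.
Proof. apply/CrealP; rewrite /r2 rmorphM rmorphB !rmorphM /= !conjCK conjCi; ring. Qed.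
Lemma r3_real (p : 'cV[C]_2) : r3 p \is Num.real.
Proof. apply/CrealP; rewrite /r3 rmorphB !rmorphM /= !conjCK; ring. Qed.

Lemma sqr_real_ge0 (x : C) : x \is Num.real -> 0 <= x ^+ 2.
Proof. by rewrite realEsqr. Qed.

Lemma cs3 (b0 b1 b2 a0 a1 a2 : C) :
  b0 \is Num.real -> b1 \is Num.real -> b2 \is Num.real ->
  a0 \is Num.real -> a1 \is Num.real -> a2 \is Num.real ->
  b0 ^+ 2 + b1 ^+ 2 + b2 ^+ 2 = 1 ->
  b0 * a0 + b1 * a1 + b2 * a2 <= sqrtC (a0 ^+ 2 + a1 ^+ 2 + a2 ^+ 2).
Proof.
move=> rb0 rb1 rb2 ra0 ra1 ra2 hb.
have hA : 0 <= a0 ^+ 2 + a1 ^+ 2 + a2 ^+ 2 by rewrite !addr_ge0 // sqr_real_ge0.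
have rX : b0 * a0 + b1 * a1 + b2 * a2 \is Num.real by rewrite !(rpredD, rpredM).
case/orP: (rX) => hX; last first.
  by apply: le_trans hX _; rewrite sqrtC_ge0.
rewrite -(ler_pXn2r (_ : 0 < 2)%N) ?nnegrE ?sqrtC_ge0 // sqrtCK -subr_ge0.
have -> : a0 ^+ 2 + a1 ^+ 2 + a2 ^+ 2 - (b0 * a0 + b1 * a1 + b2 * a2) ^+ 2 =
  (b0 ^+ 2 + b1 ^+ 2 + b2 ^+ 2) * (a0 ^+ 2 + a1 ^+ 2 + a2 ^+ 2) - (b0 * a0 + b1 * a1 + b2 * a2) ^+ 2
  by rewrite hb mul1r.
have -> : (b0 ^+ 2 + b1 ^+ 2 + b2 ^+ 2) * (a0 ^+ 2 + a1 ^+ 2 + a2 ^+ 2) - (b0 * a0 + b1 * a1 + b2 * a2) ^+ 2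
  = (b0 * a1 - b1 * a0) ^+ 2 + (b0 * a2 - b2 * a0) ^+ 2 + (b1 * a2 - b2 * a1) ^+ 2 by ring.
by rewrite !addr_ge0 // sqr_real_ge0 // !(rpredB, rpredM).
Qed.

Lemma sum2 (a b w : C) : 0 <= a -> 0 <= b -> 0 <= w -> a ^+ 2 + b ^+ 2 <= 2 * w ^+ 2 ->
  a + b <= 2 * w.
Proof.
move=> a0 b0 w0 h.
rewrite -(ler_pXn2r (_ : 0 < 2)%N) ?nnegrE ?addr_ge0 ?mulr_ge0 ?ler0n // -subr_ge0.
have -> : (2 * w) ^+ 2 - (a + b) ^+ 2 = 2 * (2 * w ^+ 2 - (a ^+ 2 + b ^+ 2)) + (a - b) ^+ 2 by ring.
apply: addr_ge0; first by rewrite mulr_ge0 ?ler0n // subr_ge0.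
by rewrite sqr_real_ge0 // rpredB // ger0_real.
Qed.

Definition v1 (pi : bool -> bool -> C) (psi : bool -> bool -> 'cV[C]_2) x :=
  pi x true * r1 (psi x true) - pi x false * r1 (psi x false).
Definition v2 (pi : bool -> bool -> C) (psi : bool -> bool -> 'cV[C]_2) x :=
  pi x true * r2 (psi x true) - pi x false * r2 (psi x false).
Definition v3 (pi : bool -> bool -> C) (psi : bool -> bool -> 'cV[C]_2) x :=
  pi x true * r3 (psi x true) - pi x false * r3 (psi x false).

Lemma vnorm (pi : bool -> bool -> C) (psi : bool -> bool -> 'cV[C]_2) x : (forall a, inner (psi x a) (psi x a) = 1) ->
  v1 pi psi x ^+ 2 + v2 pi psi x ^+ 2 + v3 pi psi x ^+ 2 =
  (pi x true + pi x false) ^+ 2 - 4 * pi x true * pi x false *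
     (inner (psi x true) (psi x false) * inner (psi x false) (psi x true)).
Proof.
move=> hn; rewrite /v1 /v2 /v3.
set p := psi x true; set q := psi x false.
have -> : (pi x true * r1 p - pi x false * r1 q) ^+ 2 + (pi x true * r2 p - pi x false * r2 q) ^+ 2 +
  (pi x true * r3 p - pi x false * r3 q) ^+ 2 =
  pi x true ^+ 2 * (r1 p * r1 p + r2 p * r2 p + r3 p * r3 p)
  - 2 * pi x true * pi x false * (r1 p * r1 q + r2 p * r2 q + r3 p * r3 q)
  + pi x false ^+ 2 * (r1 q * r1 q + r2 q * r2 q + r3 q * r3 q) by ring.
rewrite !rdot !hn; ring.
Qed.

Lemma vbound (pi : bool -> bool -> C) (psi : bool -> bool -> 'cV[C]_2) x : (forall a, 0 <= pi x a) -> pi x true + pi x false = 1 ->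
  (forall a, inner (psi x a) (psi x a) = 1) ->
  v1 pi psi x ^+ 2 + v2 pi psi x ^+ 2 + v3 pi psi x ^+ 2 <= (2 * Dx pi psi x - 1) ^+ 2.
Proof.
move=> hpos hsum hn; rewrite vnorm // hsum expr1n /Dx /=.
rewrite -(inner_conj (psi x true) (psi x false)) -normCK.
set c := `|inner _ _| ^+ 2.
have c0 : 0 <= c by rewrite exprn_ge0.
have c1 : 0 <= 1 - c.
  have E1 : 1 = inner (psi x true) (psi x true) * inner (psi x false) (psi x false) by rewrite !hn mulr1.
  by rewrite /c normCK inner_conj {1}E1 cs_inner exprn_ge0.
have hs := sqrtCK (1 - c).
set s := sqrtC (1 - c).
have s0 : 0 <= s by rewrite sqrtC_ge0.
have s1 : s <= 1.
  rewrite -(ler_pXn2r (_ : 0 < 2)%N) ?nnegrE ?ler01 // hs expr1n lerBlDr lerDl //.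
have cE : c = 1 - s ^+ 2 by rewrite hs subKr.
rewrite cE.
set e1 := pi x true; set e2 := pi x false.
have r1x : e1 \is Num.real by apply: ger0_real; apply: hpos.
have r2x : e2 \is Num.real by apply: ger0_real; apply: hpos.
case/orP: (real_leVge r1x r2x) => h.
  rewrite min_l //.
  have K := keyD e1 e2 s.
  by apply: K => //; apply: hpos.
rewrite min_r //.
have H := keyD _ _ _ (hpos false) h (etrans (addrC _ _) hsum) s0 s1.
have E1 : 1 - 4 * e2 * e1 * (1 - s ^+ 2) = 1 - 4 * e1 * e2 * (1 - s ^+ 2) by ring.
have E2 : (2 * (e2 ^+ 2 + e1 ^+ 2 + 2 * e2 * e1 * s + (1 - s ^+ 2) * (e2 * e1 - e2 ^+ 2)) - 1) ^+ 2
  = (2 * (e1 ^+ 2 + e2 ^+ 2 + 2 * e1 * e2 * s + (1 - s ^+ 2) * (e1 * e2 - e2 ^+ 2)) - 1) ^+ 2 by ring.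
by rewrite -E1 -E2.
Qed.
End S.
Arguments v1 {C}. Arguments v2 {C}. Arguments v3 {C}. Arguments Q {C}.
Arguments cs3 {C}. Arguments sum2 {C}. Arguments vbound {C}. Arguments corrE_expand {C}.

Theorem corollary1 (C : numClosedFieldType)
  (pi : bool -> bool -> C) (psi : bool -> bool -> 'cV[C]_2) (bv : bool -> 'rV[C]_3) :
  (forall x a, 0 <= pi x a) ->
  (forall x, pi x true + pi x false = 1) ->
  (forall x a, inner (psi x a) (psi x a) = 1) ->
  (forall y i, bv y 0 i \is Num.real) ->
  (forall y, \sum_(i < 3) bv y 0 i ^+ 2 = 1) ->
  S_CHSH pi psi bv <= 2 * sqrtC ((2 * Dx pi psi false - 1) ^+ 2 + (2 * Dx pi psi true - 1) ^+ 2).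
Proof.
move=> hpos hsum hn hreal hb.
have hb' y : bv y 0 0 ^+ 2 + bv y 0 1 ^+ 2 + bv y 0 2 ^+ 2 = 1.
  rewrite -(hb y) !big_ord_recl big_ord0 addr0 addrA.
  by congr (_ + bv y 0 _ ^+ 2 + bv y 0 _ ^+ 2); apply/val_inj.
have rv x : [/\ v1 pi psi x \is Num.real, v2 pi psi x \is Num.real & v3 pi psi x \is Num.real].
  have p1 := ger0_real (hpos x true); have p2 := ger0_real (hpos x false).
  by split; apply: rpredB; apply: rpredM => //; rewrite ?r1_real ?r2_real ?r3_real.
have [ra1 ra2 ra3] := rv false.
have [rb1 rb2 rb3] := rv true.
set A1 := v1 pi psi false + v1 pi psi true.
set A2 := v2 pi psi false + v2 pi psi true.
set A3 := v3 pi psi false + v3 pi psi true.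
set B1 := v1 pi psi false - v1 pi psi true.
set B2 := v2 pi psi false - v2 pi psi true.
set B3 := v3 pi psi false - v3 pi psi true.
have hA := cs3 _ _ _ A1 A2 A3 (hreal false 0) (hreal false 1) (hreal false 2)
  (rpredD ra1 rb1) (rpredD ra2 rb2) (rpredD ra3 rb3) (hb' false).
have hB := cs3 _ _ _ B1 B2 B3 (hreal true 0) (hreal true 1) (hreal true 2)
  (rpredB ra1 rb1) (rpredB ra2 rb2) (rpredB ra3 rb3) (hb' true).
have hS : S_CHSH pi psi bv =
  (bv false 0 0 * A1 + bv false 0 1 * A2 + bv false 0 2 * A3) +
  (bv true 0 0 * B1 + bv true 0 1 * B2 + bv true 0 2 * B3).
  rewrite /S_CHSH !corrE_expand ?hn // /Q /A1 /A2 /A3 /B1 /B2 /B3 /v1 /v2 /v3; ring.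
rewrite hS; apply: le_trans (lerD hA hB) _.
set PA := A1 ^+ 2 + A2 ^+ 2 + A3 ^+ 2.
set PB := B1 ^+ 2 + B2 ^+ 2 + B3 ^+ 2.
set T2 := (2 * Dx pi psi false - 1) ^+ 2 + (2 * Dx pi psi true - 1) ^+ 2.
have hPA : 0 <= PA by apply: addr_ge0; [apply: addr_ge0|]; apply: sqr_real_ge0; exact: rpredD.
have hPB : 0 <= PB by apply: addr_ge0; [apply: addr_ge0|]; apply: sqr_real_ge0; exact: rpredB.
have hPT : PA + PB <= 2 * T2.
  have -> : PA + PB = 2 * ((v1 pi psi false ^+ 2 + v2 pi psi false ^+ 2 + v3 pi psi false ^+ 2)
     + (v1 pi psi true ^+ 2 + v2 pi psi true ^+ 2 + v3 pi psi true ^+ 2)).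
    by rewrite /PA /PB /A1 /A2 /A3 /B1 /B2 /B3; ring.
  by rewrite ler_pM2l ?ltr0n // lerD // vbound.
have T20 : 0 <= T2.
  have : 0 <= 2 * T2 by apply: le_trans hPT; rewrite addr_ge0.
  by rewrite pmulr_rge0 ?ltr0n.
apply: sum2; rewrite ?sqrtC_ge0 // !sqrtCK //.
Qed.
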